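(* Let $M=(\Gamma,\Sigma,P,\delta)$ be a linear bounded deterministic Turing machine, let $x\in\Sigma^*$ be an input with $|x|=n\geq 1$, and let $Sys_M$ be the interaction system associated with $M$ and $x$ as defined in the context. Then $M$ accepts $x$ (i.e. $M$ started on $x$ halts in state $p^Y$) if and only if some global state $q=(q_0,\dots,q_{n+1})$ of $Sys_M$ is reachable such that $q_i=(p^Y,\gamma)$ for some $i\in\{0,\dots,n+1\}$ and some $\gamma\in\Gamma$.
   Context: Interaction systems. Let $K=\{1,\dots,n\}$ (or any finite index set) be a set of components and $\{A_i\}_{i\in K}$ a family of pairwise disjoint finite sets of ports. An interaction is a nonempty set $\alpha\subseteq\bigcup_{i\in K}A_i$ with $|\alpha\cap A_i|\le 1$ for all $i$. An interaction set $Int$ is a set of interactions such that every port occurs in at least one interaction; $IM=(K,\{A_i\}_{i\in K},Int)$ is an interaction model. An interaction system is $Sys=(IM,\{T_i\}_{i\in K})$ where $T_i=(Q_i,A_i,\to_i,q_i^0)$ is a labeled transition system with finite state set $Q_i$, transition relation $\to_i\subseteq Q_i\times A_i\times Q_i$ and initial state $q_i^0$. Its global behavior is the transition system with states $Q=\prod_{i\in K}Q_i$, initial state $q^0=(q_i^0)_{i\in K}$, and $q\xrightarrow{\alpha}q'$ (for $\alpha\in Int$) iff for all $i\in K$: if $\alpha\cap A_i=\{a_i\}$ then $(q_i,a_i,q_i')\in\to_i$, and if $\alpha\cap A_i=\emptyset$ then $q_i=q_i'$. A global state is reachable if there is a path from $q^0$ to it in the global behavior. Turing machines. A DTM is $M=(\Gamma,\Sigma,P,\delta)$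 with finite tape alphabet $\Gamma$, input alphabet $\Sigma\subseteq\Gamma$, blank $b\in\Gamma\setminus\Sigma$, finite state set $P$ containing initial state $p^0$ and halt states $p^Y,p^N$, and $\delta:(P\setminus\{p^Y,p^N\})\times\Gamma\to P\times\Gamma\times\{-1,+1\}$. The tape is two-way infinite with cells indexed by integers; input $x=x^1\cdots x^n$ is written on cells $1,\dots,n$ (all other cells blank), the machine starts in $p^0$ with head on cell $1$. $M$ is linear bounded if no computation on an input of length $n$ uses cells other than $0,\dots,n+1$. Construction of $Sys_M$. Components $K=\{0,\dots,n+1\}$ (one per tape cell). Let $P'=P\setminus\{p^Y,p^N\}$. For $1\le i\le n$: $A_i=\{(p,\gamma)_i^1,(p,\gamma)_i^2 : p\in P',\gamma\in\Gamma\}$. $A_0=\{(p,\gamma)_0^1: p\in P',\gamma\in\Gamma,\ \delta(p,\gamma)\text{ has direction }+1\}\cup\{(p,\gamma)_0^2: p\in P',\gamma\in\Gamma,\ \delta(p,\gamma)\text{ has direction }-1\}$, and $A_{n+1}=\{(p,\gamma)_{n+1}^1: \delta(p,\gamma)\text{ has direction }-1\}\cup\{(p,\gamma)_{n+1}^2: \delta(p,\gamma)\text{ has direction }+1\}$ (with $p\in P',\gamma\in\Gamma$). Interactions: $Int=\{\{(p,\gamma)_i^1,(p,\gamma)_{i+T}^2\} : p\in P',\gamma\in\Gamma,\ \delta(p,\gamma)=(p',\gamma',T),\ 0\le i\le n+1,\ 0\le i+T\le n+1\}$. For each $i$, $Q_i=\{(p,\gamma): p\in P\cup\{s\},\gamma\in\Gamma\}$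 where $s\notin P$ is a fresh symbol ($(s,\gamma)$ means cell content $\gamma$, head elsewhere; $(p,\gamma)$ with $p\in P$ means head on this cell in state $p$ reading $\gamma$). Initial states: $q_0^0=(s,b)$, $q_1^0=(p^0,x^1)$, $q_i^0=(s,x^i)$ for $2\le i\le n$, $q_{n+1}^0=(s,b)$. Transitions $\to_i$ (only for ports belonging to $A_i$): (a) $(p,\gamma)\xrightarrow{(p,\gamma)_i^1}(s,\gamma')$ whenever $p\in P'$ and $\delta(p,\gamma)=(p',\gamma',T)$ for some $p',T$; (b) $(s,\tilde\gamma)\xrightarrow{(p,\gamma)_i^2}(p',\tilde\gamma)$ for all $\tilde\gamma\in\Gamma$ whenever $p\in P'$ and $\delta(p,\gamma)=(p',\gamma',T)$ for some $\gamma',T$. *)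

(* Defs.v *)
From HB Require Import structures.
From mathcomp Require Import all_boot all_order all_algebra.
From Stdlib Require Import Relations.
Unset Strict Implicit. Unset Printing Implicit Defensive.
Import Order.TTheory GRing.Theory Num.Theory.

(* Ports form a finite type; each port has an owner component, so the *)
(* families A_i := [pred a | is_port a & owner a == i] are pairwise   *)
(* disjoint by construction.                                          *)
Record InteractionSystem := {
  comp : finType;
  port : finType;
  owner : port -> comp;
  is_port : pred port;
  Int : {set port} -> Prop;
  lstate : comp -> finType;
  ltrans : forall i : comp, lstate i -> port -> lstate i -> bool;
  linit : forall i : comp, lstate i
}.

Definition A (S : InteractionSystem) (i : comp S) : pred (port S) :=
  [pred a | is_port S a && (owner S a == i)].

Definition gstate (S : InteractionSystem) := forall i : comp S, lstate S i.

Definition ginit (S : InteractionSystem) : gstate S := fun i => linit S i.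

Definition gstep (S : InteractionSystem) (alpha : {set port S}) (q q' : gstate S) : Prop :=
  Int S alpha /\
  forall i : comp S,
    (forall a, a \in alpha -> a \in A S i -> ltrans S i (q i) a (q' i)) /\
    ((forall a, a \in alpha -> a \notin A S i) -> q i = q' i).

Definition greach (S : InteractionSystem) : relation (gstate S) :=
  clos_refl_trans_1n _ (fun q q' => exists alpha, gstep S alpha q q').

Definition reachable (S : InteractionSystem) (q : gstate S) : Prop :=
  greach S (ginit S) q.

Variant dir := Lft | Rgt.
Definition isR (d : dir) : bool := if d is Rgt then true else false.
Definition dval (d : dir) : int := if d is Lft then (-1)%R else 1%R.

Record DTM := {
  tsym : finType;
  Sigma : pred tsym;
  blank : tsym;
  blank_notin : ~~ Sigma blank;
  tst : finType;
  p0 : tst; pY : tst; pN : tst;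
  pYN : pY != pN;
  (* delta is only consulted on non-halting states P' = P \ {pY,pN} *)
  delta : tst -> tsym -> tst * tsym * dir
}.

Definition halting (M : DTM) (p : tst M) : bool := (p == pY M) || (p == pN M).

Record config (M : DTM) := Config {
  cst : tst M;
  ctape : int -> tsym M;
  chead : int }.

Definition tm_step (M : DTM) (c c' : config M) : Prop :=
  ~~ halting M (cst M c) /\
  let: (p', g', d) := delta M (cst M c) (ctape M c (chead M c)) in
  [/\ cst M c' = p',
      chead M c' = (chead M c + dval d)%R &
      forall j, ctape M c' j = (if j == chead M c then g' else ctape M c j)].

Definition tm_reach (M : DTM) := clos_refl_trans_1n _ (tm_step M).

Definition init_config (M : DTM) (x : seq (tsym M)) : config M :=
  Config M (p0 M)
    (fun j : int => if ((0 < j)%R && (j <= (size x)%:Z)%R) then nth (blank M) x `|j - 1|%N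
                    else blank M)
    1%R.

Definition accepts (M : DTM) (x : seq (tsym M)) : Prop :=
  exists c, tm_reach M (init_config M x) c /\ cst M c = pY M.

Definition linear_bounded (M : DTM) : Prop :=
  forall x : seq (tsym M), all (Sigma M) x ->
  forall c, tm_reach M (init_config M x) c ->
    (0 <= chead M c)%R /\ (chead M c <= (size x)%:Z + 1)%R.

(* Port (i, p, g, true) = (p,g)_i^1 ; (i, p, g, false) = (p,g)_i^2.    *)
(* Local state (None, g) = (s,g) ; (Some p, g) = (p,g).                *)
Section SysM.
Variables (M : DTM) (x : seq (tsym M)).
Let n := size x.

Definition sport : finType := ('I_n.+2 * tst M * tsym M * bool)%type.
Definition sstate : finType := (option (tst M) * tsym M)%type.

Definition ddir (p : tst M) (g : tsym M) : dir := (delta M p g).2.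

Definition sis_port (a : sport) : bool :=
  let: (i, p, g, k) := a in
  ~~ halting M p &&
  (if nat_of_ord i == 0 then (if k then isR (ddir p g) else ~~ isR (ddir p g))
   else if nat_of_ord i == n.+1 then (if k then ~~ isR (ddir p g) else isR (ddir p g))
   else true).

Definition sInt (alpha : {set sport}) : Prop :=
  exists (i j : 'I_n.+2) (p : tst M) (g : tsym M),
    ~~ halting M p /\ (j%:Z = i%:Z + dval (ddir p g))%R /\
    alpha = [set (i, p, g, true); (j, p, g, false)].

Definition strans (i : 'I_n.+2) (q : sstate) (a : sport) (q' : sstate) : bool :=
  let: (j, p, g, k) := a in
  sis_port a && (j == i) && ~~ halting M p &&
  let: (p', g', _) := delta M p g in
  if k then (q == (Some p, g)) && (q' == (None, g'))
  else (q.1 == None) && (q' == (Some p', q.2)).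

Definition sinit (i : 'I_n.+2) : sstate :=
  (if nat_of_ord i == 1 then Some (p0 M) else None,
   if (0 < i) && (i <= n) then nth (blank M) x i.-1 else blank M).

Definition SysM : InteractionSystem :=
  {| comp := 'I_n.+2; port := sport; owner := fun a => a.1.1.1;
     is_port := sis_port; Int := sInt; lstate := fun _ => sstate;
     ltrans := strans; linit := sinit |}.
End SysM.

(* Main.v *)
Require Import Defs.
From HB Require Import structures.
From mathcomp Require Import all_boot all_order all_algebra.
From mathcomp Require Import zify.
From Stdlib Require Import Relations.
Import Order.TTheory GRing.Theory Num.Theory.

Definition enc (M : DTM) (x : seq (tsym M)) (c : config M) (k : 'I_(size x).+2) : sstate M :=
  (if (Posz (nat_of_ord k) == chead M c) then Some (cst M c) else None, ctape M c (Posz (nat_of_ord k))).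

Lemma isport (M : DTM) (x : seq (tsym M)) (i j : 'I_(size x).+2) p g :
  ~~ halting M p -> (Posz j = Posz i + dval (ddir M p g))%R ->
  sis_port M x (i,p,g,true) && sis_port M x (j,p,g,false).
Proof.
move=> hp hj; rewrite /sis_port hp /=.
have hi := ltn_ord i; have hj' := ltn_ord j.
case: (ddir M p g) hj => /= hj;
repeat case: eqP => /= ?; lia.
Qed.

Lemma dval_neq d : dval d <> 0%R.
Proof. by case: d. Qed.

Lemma fwd_step (M : DTM) (x : seq (tsym M)) (c c' : config M) (i j : 'I_(size x).+2)
  (q : gstate (SysM M x)) :
  tm_step M c c' -> Posz i = chead M c -> Posz j = chead M c' ->
  (forall k, q k = enc M x c k) ->
  gstep (SysM M x)
    [set ((i, cst M c, ctape M c (chead M c), true) : sport M x);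
         (j, cst M c, ctape M c (chead M c), false)] q (enc M x c').
Proof.
case=> hnh.
set p := cst M c; set g := ctape M c (chead M c).
case E: (delta M p g) => [[p' g'] d] [hst hhd htp] hi hj hq.
have hg : g = ctape M c (Posz i) by rewrite /g hi.
have hdd : ddir M p g = d by rewrite /ddir E.
have hji : (Posz j = Posz i + dval d)%R by rewrite hj hhd hi.
have hd0 := dval_neq d.
have /andP[hpi hpj] := @isport M x i j p g hnh (etrans hji (congr1 _ (congr1 _ (esym hdd)))).
split.
  by exists i, j, p, g; split => //; split => //; rewrite hdd.
move=> k; split.
  move=> a; rewrite in_set2 => /orP [/eqP-> | /eqP->]; rewrite inE /= => /andP[_ /eqP hk]; subst k.
    change (strans M x i (q i) (i,p,g,true) (enc M x c' i)).
    rewrite /strans hpi eqxx hnh E hq /enc hst hhd htp -hi !eqxx /=.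
    have -> : (Posz i == Posz i + dval d)%R = false.
      by apply/eqP => /eqP; rewrite -subr_eq0 opprD addrA subrr add0r oppr_eq0 => /eqP.
    by rewrite -hg !eqxx.
  change (strans M x j (q j) (j,p,g,false) (enc M x c' j)).
  rewrite /strans hpj eqxx hnh E hq /enc hst hhd htp -hi -hji !eqxx /=.
  have -> : (Posz j == Posz i) = false.
    by apply/eqP => hh; apply: hd0; move: hji; rewrite hh => /eqP; rewrite -subr_eq0 opprD addrA subrr add0r oppr_eq0 => /eqP.
  by rewrite !eqxx.
move=> hno.
have hki : k != i.
  apply/eqP => hk; subst k.
  move: (hno (i, p, g, true)); rewrite in_set2 eqxx /= => /(_ isT)/negP; apply; rewrite /A inE; apply/andP; split; [exact: hpi | exact: eqxx].
have hkj : k != j.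
  apply/eqP => hk; subst k.
  move: (hno (j, p, g, false)); rewrite in_set2 eqxx orbT /= => /(_ isT)/negP; apply; rewrite /A inE; apply/andP; split; [exact: hpj | exact: eqxx].
rewrite hq /enc htp hst hhd -hi -hji.
have -> : (Posz k == Posz i) = false by apply/eqP => -[] /val_inj /eqP; rewrite (negbTE hki).
have -> : (Posz k == Posz j) = false by apply/eqP => -[] /val_inj /eqP; rewrite (negbTE hkj).
by [].
Qed.

Lemma bwd_step (M : DTM) (x : seq (tsym M)) (c : config M) (q q' : gstate (SysM M x)) alpha :
  gstep (SysM M x) alpha q q' -> (forall k, q k = enc M x c k) ->
  exists c', tm_step M c c' /\ forall k, q' k = enc M x c' k.
Proof.
case=> [[i [j [p [g [hp [hji ->]]]]]] hk] hq.
have /andP[hpi hpj] := @isport M x i j p g hp hji.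
have hinA : forall a : sport M x, sis_port M x a -> a \in A (SysM M x) a.1.1.1.
  by move=> a ha; rewrite /A inE; apply/andP; split; [exact: ha | exact: eqxx].
have := (hk i).1 (i,p,g,true) (ltac:(by rewrite in_set2 eqxx)) (hinA _ hpi).
have := (hk j).1 (j,p,g,false) (ltac:(by rewrite in_set2 eqxx orbT)) (hinA _ hpj).
change (strans M x j (q j) (j,p,g,false) (q' j) -> strans M x i (q i) (i,p,g,true) (q' i) -> exists c' : config M, tm_step M c c' /\ (forall k, q' k = enc M x c' k)).
rewrite /strans hpi hpj !eqxx hp /=.
case E: (delta M p g) => [[p' g'] d] /andP[/eqP hqj /eqP hq'j] /andP[/eqP hqi /eqP hq'i].
have hdd : ddir M p g = d by rewrite /ddir E.
rewrite hdd in hji.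
move: hqi; rewrite hq /enc; case: eqP => // hhead [hst htp].
move: hqj; rewrite hq /enc; case: eqP => // hjhead _.
exists (Config M p' (fun k => if k == chead M c then g' else ctape M c k) (chead M c + dval d)%R).
split.
  split; first by rewrite hst.
  by rewrite hst -hhead htp E.
move=> k /=.
have hd0 := dval_neq d.
case: (eqVneq k i) => [->|hki].
  rewrite hq'i /enc /= -hhead.
  have -> : (Posz i == Posz i + dval d)%R = false.
    by apply/eqP => /eqP; rewrite -subr_eq0 opprD addrA subrr add0r oppr_eq0 => /eqP.
  by rewrite eqxx.
case: (eqVneq k j) => [->|hkj].
  rewrite hq'j hq /enc /= -hhead -hji eqxx.
  have -> : (Posz j == Posz i) = false.
    by apply/eqP => hh; apply: hd0; move: hji; rewrite hh => /eqP; rewrite -subr_eq0 opprD addrA subrr add0r oppr_eq0 => /eqP.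
  by [].
have := (hk k).2.
rewrite -/(q k) -/(q' k).
move=> <-; last first.
  move=> a; rewrite in_set2 => /orP[/eqP-> | /eqP->]; rewrite /A inE /= negb_and; apply/orP; right.
    by rewrite eq_sym.
  by rewrite eq_sym.
rewrite hq /enc /= -hhead -hji.
have -> : (Posz k == Posz i) = false by apply/eqP => -[] /val_inj /eqP; rewrite (negbTE hki).
have -> : (Posz k == Posz j) = false by apply/eqP => -[] /val_inj /eqP; rewrite (negbTE hkj).
by [].
Qed.

Lemma init_enc (M : DTM) (x : seq (tsym M)) (k : 'I_(size x).+2) :
  ginit (SysM M x) k = enc M x (init_config M x) k.
Proof.
rewrite /ginit /= /sinit /enc /= ltz_nat lez_nat.
have -> : (Posz k == 1%R) = (nat_of_ord k == 1%N) by [].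
congr pair; case: ifP => // /andP[hk _].
by have -> : `|(Posz k - 1%Z)%R|%N = k.-1 by lia.
Qed.

Lemma mk_ord (n : nat) (h : int) : (0 <= h)%R -> (h <= Posz n + 1)%R ->
  exists i : 'I_n.+2, Posz i = h.
Proof.
move=> h0 h1.
have hlt : (`|h|%N < n.+2)%N by lia.
exists (Ordinal hlt) => /=; lia.
Qed.

Lemma rt_to_n1 A (R : relation A) a b : clos_refl_trans_1n A R a b -> clos_refl_trans_n1 A R a b.
Proof. by move=> h; apply: clos_rt_rtn1; apply: clos_rt1n_rt. Qed.
Lemma n1_to_rt A (R : relation A) a b : clos_refl_trans_n1 A R a b -> clos_refl_trans_1n A R a b.
Proof. by move=> h; apply: clos_rt_rt1n; apply: clos_rtn1_rt. Qed.

Arguments rt_to_n1 {A R a b}.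
Arguments n1_to_rt {A R a b}.

Lemma fwd_sim (M : DTM) (x : seq (tsym M)) :
  linear_bounded M -> all (Sigma M) x ->
  forall c, tm_reach M (init_config M x) c ->
  exists q, reachable (SysM M x) q /\ forall k, q k = enc M x c k.
Proof.
move=> hlb hx c hr0; have := rt_to_n1 hr0; clear hr0; elim=> [|y z hyz hr [q [hq hqe]]].
  by exists (ginit (SysM M x)); split; [exact: rt1n_refl | exact: init_enc].
have hry := n1_to_rt hr.
have hrz : tm_reach M (init_config M x) z.
  by apply: n1_to_rt; apply: Relation_Operators.rtn1_trans hr.
have [hy0 hy1] := hlb x hx y hry.
have [hz0 hz1] := hlb x hx z hrz.
have [i hi] := @mk_ord (size x) _ hy0 hy1.
have [j hj] := @mk_ord (size x) _ hz0 hz1.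
exists (enc M x z); split; last by [].
apply: n1_to_rt; apply: Relation_Operators.rtn1_trans (rt_to_n1 hq).
by eexists; exact (@fwd_step M x y z i j q hyz hi hj hqe).
Qed.

Lemma bwd_sim (M : DTM) (x : seq (tsym M)) (q : gstate (SysM M x)) :
  reachable (SysM M x) q ->
  exists c, tm_reach M (init_config M x) c /\ forall k, q k = enc M x c k.
Proof.
move=> hr0; have := rt_to_n1 hr0; clear hr0; elim=> [|y z [alpha hyz] hr [c [hc hce]]].
  by exists (init_config M x); split; [exact: rt1n_refl | exact: init_enc].
have [c' [hcc' hc'e]] := @bwd_step M x c y z alpha hyz hce.
exists c'; split => //.
by apply: n1_to_rt; apply: Relation_Operators.rtn1_trans (rt_to_n1 hc).
Qed.

Theorem mainTheorem1 (M : DTM) (x : seq (tsym M)) :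
  linear_bounded M -> all (Sigma M) x -> 0 < size x ->
  accepts M x <->
  exists q : gstate (SysM M x),
    reachable (SysM M x) q /\
    exists (i : 'I_(size x).+2) (g : tsym M), q i = (Some (pY M), g).
Proof.
move=> hlb hx hn; split.
  case=> c [hr hY].
  have [q [hq hqe]] := @fwd_sim M x hlb hx c hr.
  have [h0 h1] := hlb x hx c hr.
  have [i hi] := @mk_ord (size x) _ h0 h1.
  exists q; split => //; exists i, (ctape M c (Posz i)).
  by rewrite hqe /enc hi eqxx hY.
case=> q [hq [i [g hqi]]].
have [c [hc hce]] := @bwd_sim M x q hq.
exists c; split => //.
move: hqi; rewrite hce /enc; by case: eqP => // _ [] ->.
Qed.
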